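(* In the setting of the context, let $\mathcal{K}$ be an arbitrary set of policies and define (with $\inf\emptyset=+\infty$) $\varphi:=\inf\{h(y): y\in M_1\}$, $\varphi_1:=\inf\{h(y):y\in M_1\cap\mathcal{K}\}$, $\varphi_3:=\inf\{h(y): y\in\Pi(M_2\cap\mathcal{K})\}$, $\varphi_4:=\inf\{h(y):y\in M_1\cap\Pi(\mathcal{K})\}$, and, with $Y^*:=\arg\min\{h(y):y\in M_2\cap\mathcal{K}\}$, $\varphi_2:=\inf\{h(z): z\in\Pi(Y^* )\}$. Then every element of $M_1\cap\mathcal{K}$, of $\Pi(M_2\cap\mathcal{K})$, of $M_1\cap\Pi(\mathcal{K})$ and of $\Pi(Y^* )$ belongs to $M_1$ (i.e. is feasible for the problem $\min\{h(y):y\in M_1\}$), and \[ \varphi_1\ge\varphi_3,\qquad \varphi_2\ge \varphi_3\ge\varphi_4\ge\varphi . \]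
   Context: Let $T\ge 2$, $M\ge 1$ and $n_1,\dots,n_T\ge 1$ be integers. Let $\xi=(\xi_1,\dots,\xi_T)$ be a random vector with values in $\mathbb{R}^{MT}$, $\xi_t\in\mathbb{R}^M$, on a probability space $(\Omega,\mathcal{A},\mathbb{P})$; $\xi_{1:t}:=(\xi_1,\dots,\xi_t)$. A policy is a tuple $y=(y_t)_{t=1}^T$ where $y_1\in\mathbb{R}^{n_1}$ is deterministic and, for $t\ge 2$, $y_t:\mathbb{R}^{M(t-1)}\to\mathbb{R}^{n_t}$ is Borel measurable, evaluated at $\xi_{1:t-1}$. For $t=1,\dots,T$, $\tau=1,\dots,t$, $k\in\{1,2,3\}$ let $A^{(k)}_{t,\tau}$, $B^{(k)}_{t,\tau}$ be real matrices and $b^{(k)}_t$ vectors of compatible sizes, with $B^{(3)}_{t,t}=0$; let $h_t\in\mathbb{R}^{n_t}$ and let $\mathcal{P}_t\ge 0$ be nonnegative vectors. The objective is $h(y):=\sum_{t=1}^T\mathbb{E}\big\{\langle h_t,y_t(\xi_{1:t-1})\rangle+\langle\mathcal{P}_t,(\sum_{\tau=1}^tA^{(1)}_{t,\tau}y_\tau(\xi_{1:\tau-1})+\sum_{\tau=1}^tB^{(1)}_{t,\tau}\xi_\tau-b^{(1)}_t)_+\rangle\big\}$ (assumed well defined in $\mathbb{R}\cup\{+\infty\}$), where $(\cdot)_+$ is the componentwise maximum with $0$. Fix $p\in(0,1]$. Define $M_1$ = set of policies $y$ with $\mathbb{P}\big(\sum_{\tau=1}^t A^{(2)}_{t,\tau}y_\tau(\xi_{1:\tau-1})+\sum_{\tau=1}^t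 B^{(2)}_{t,\tau}\xi_\tau\le b^{(2)}_t,\ t=1,\dots,T\big)\ge p$ and $\sum_{\tau=1}^t A^{(3)}_{t,\tau}y_\tau(\xi_{1:\tau-1})+\sum_{\tau=1}^{t-1} B^{(3)}_{t,\tau}\xi_\tau\le b^{(3)}_t$ for $t=1,\dots,T$, $\mathbb{P}$-a.s.; $M_2$ = set of policies $y$ with $\mathbb{P}\big(\forall t:\ \sum_{\tau=1}^t A^{(2)}_{t,\tau}y_\tau(\xi_{1:\tau-1})+\sum_{\tau=1}^t B^{(2)}_{t,\tau}\xi_\tau\le b^{(2)}_t\text{ and }\sum_{\tau=1}^t A^{(3)}_{t,\tau}y_\tau(\xi_{1:\tau-1})+\sum_{\tau=1}^{t-1} B^{(3)}_{t,\tau}\xi_\tau\le b^{(3)}_t\big)\ge p$. Let $X_t(z_{1:t-1},\xi_{1:t-1}):=\{u\in\mathbb{R}^{n_t}:A^{(3)}_{t,t}u\le b^{(3)}_t-\sum_{\tau<t}B^{(3)}_{t,\tau}\xi_\tau-\sum_{\tau<t}A^{(3)}_{t,\tau}z_\tau\}$, assumed nonempty for all arguments, and $\pi_X$ the Euclidean projection onto $X$. The operator $\Pi$ maps a policy $y$ to $z=\Pi(y)$ with $z_1:=\pi_{X_1}(y_1)$ and $z_t(\xi_{1:t-1}):=\pi_{X_t(z_1,z_2(\xi_1),\dots,z_{t-1}(\xi_{1:t-2}),\xi_{1:t-1})}(y_t(\xi_{1:t-1}))$ for all $\xi_{1:t-1}$, $t\ge 2$; $\Pi(y)$ is assumed to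 be a policy. $\Pi(\mathcal{K}):=\{\Pi(y):y\in\mathcal{K}\}$. *)

(* Defs.v *)
From HB Require Import structures.
From mathcomp Require Import all_boot all_order all_algebra.
From mathcomp Require Import all_classical all_reals all_analysis.
Set Implicit Arguments. Unset Strict Implicit. Unset Printing Implicit Defensive.
Import Order.TTheory GRing.Theory Num.Theory.
Import numFieldNormedType.Exports.
Local Open Scope classical_set_scope.
Local Open Scope ring_scope.

(* Stages t = 1..T are represented by t : 'I_T (value t-1).  A history
   xi_{1:k} in R^{Mk} is represented as an M x k matrix whose columns are
   xi_1,...,xi_k. *)

Definition borel_fun (U V : topologicalType) (f : U -> V) : Prop :=
  forall B : set V, open B -> smallest (sigma_algebra setT) open (f @^-1` B).

Section Problem.
Variables (R : realType) (T M : nat) (n : 'I_T -> nat).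

(* j-th column (0-based) of a history matrix, or 0 if j is out of range *)
Definition colA (k : nat) (H : 'M[R]_(M, k)) (j : nat) : 'cV[R]_M :=
  \col_i (match (insub j : option 'I_k) with Some l => H i l | None => 0 end).

(* truncation of a history to its first j columns (padding with 0 if j > k) *)
Definition trunc (j k : nat) (H : 'M[R]_(M, k)) : 'M[R]_(M, j) :=
  \matrix_(i < M, l < j)
    (match (insub (val l) : option 'I_k) with Some l' => H i l' | None => 0 end).

(* a policy: y t is a function of xi_{1:t-1} (an M x (t-1) matrix) *)
Definition policy := forall t : 'I_T, 'M[R]_(M, val t) -> 'cV[R]_(n t).

Definition is_policy (y : policy) : Prop :=
  forall t : 'I_T, @borel_fun 'M[R]_(M, val t) 'cV[R]_(n t) (y t).

Definition dec (y : policy) (X : 'M[R]_(M, T)) : forall t : 'I_T, 'cV[R]_(n t) :=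
  fun t => y t (trunc (val t) X).

Record data := Data {
  m1 : 'I_T -> nat; m2 : 'I_T -> nat; m3 : 'I_T -> nat;
  A1 : forall t tau : 'I_T, 'M[R]_(m1 t, n tau);
  B1 : forall t tau : 'I_T, 'M[R]_(m1 t, M);
  b1 : forall t : 'I_T, 'cV[R]_(m1 t);
  A2 : forall t tau : 'I_T, 'M[R]_(m2 t, n tau);
  B2 : forall t tau : 'I_T, 'M[R]_(m2 t, M);
  b2 : forall t : 'I_T, 'cV[R]_(m2 t);
  A3 : forall t tau : 'I_T, 'M[R]_(m3 t, n tau);
  B3 : forall t tau : 'I_T, 'M[R]_(m3 t, M);
  b3 : forall t : 'I_T, 'cV[R]_(m3 t);
  hc : forall t : 'I_T, 'cV[R]_(n t);
  Pen : forall t : 'I_T, 'cV[R]_(m1 t)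
}.

Variable D : data.

Definition dotv (k : nat) (a b : 'cV[R]_k) : R := \sum_i a i 0 * b i 0.
Definition posv (k : nat) (a : 'cV[R]_k) : 'cV[R]_k := \col_i Num.max (a i 0) 0.
Definition lev (k : nat) (a b : 'cV[R]_k) : Prop := forall i, a i 0 <= b i 0.

Definition cons2 (t : 'I_T) (u : forall tau : 'I_T, 'cV[R]_(n tau))
  (X : 'M[R]_(M, T)) : Prop :=
  lev (\sum_(tau < T | (tau <= t)%N) A2 D t tau *m u tau
       + \sum_(tau < T | (tau <= t)%N) B2 D t tau *m colA X tau) (b2 D t).

Definition cons3 (t : 'I_T) (u : forall tau : 'I_T, 'cV[R]_(n tau))
  (X : 'M[R]_(M, T)) : Prop :=
  lev (\sum_(tau < T | (tau <= t)%N) A3 D t tau *m u tau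
       + \sum_(tau < T | (tau < t)%N) B3 D t tau *m colA X tau) (b3 D t).

Definition stage_cost (t : 'I_T) (u : forall tau : 'I_T, 'cV[R]_(n tau))
  (X : 'M[R]_(M, T)) : R :=
  dotv (hc D t) (u t)
  + dotv (Pen D t) (posv (\sum_(tau < T | (tau <= t)%N) A1 D t tau *m u tau
       + \sum_(tau < T | (tau <= t)%N) B1 D t tau *m colA X tau - b1 D t)).

(* X_t(z_{1:t-1}, xi_{1:t-1}); H is the history xi_{1:t-1}, u holds z_tau
   (only the tau < t are used) *)
Definition Xset (t : 'I_T) (u : forall tau : 'I_T, 'cV[R]_(n tau))
  (H : 'M[R]_(M, val t)) : set 'cV[R]_(n t) :=
  [set v | lev (A3 D t t *m v)
     (b3 D t - \sum_(tau < T | (tau < t)%N) B3 D t tau *m colA H tau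
             - \sum_(tau < T | (tau < t)%N) A3 D t tau *m u tau)].

Arguments Xset t u H : clear implicits.

(* Euclidean projection onto a set X: a point of X minimising the Euclidean
   distance to v (chosen by xget; v itself if there is none) *)
Definition sqdist (k : nat) (a b : 'cV[R]_k) : R := \sum_i (a i 0 - b i 0) ^+ 2.
Definition proj (k : nat) (X : set 'cV[R]_k) (v : 'cV[R]_k) : 'cV[R]_k :=
  xget v [set u | X u /\ forall w, X w -> sqdist u v <= sqdist w v].

(* z = Pi(y): the defining recursive equations of the operator Pi,
   for every history xi_{1:t-1} *)
Definition isPi (y z : policy) : Prop :=
  forall (t : 'I_T) (H : 'M[R]_(M, val t)),
    z t H = proj (Xset t (fun tau => z tau (trunc (val tau) H)) H) (y t H).

Definition PiImg (K : set policy) : set policy :=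
  [set z | exists2 y, K y & isPi y z].

Variables (d : measure_display) (Omega : measurableType d)
  (P : probability Omega R) (xi : Omega -> 'M[R]_(M, T)) (p : R).

Definition hobj (y : policy) : \bar R :=
  (\sum_(t < T) \int[P]_w (stage_cost t (dec y (xi w)) (xi w))%:E)%E.

Definition M1 : set policy :=
  [set y | is_policy y
     /\ (P [set w | forall t, cons2 t (dec y (xi w)) (xi w)] >= p%:E)%E
     /\ {ae P, forall w, forall t, cons3 t (dec y (xi w)) (xi w)}].

Definition M2 : set policy :=
  [set y | is_policy y
     /\ (P [set w | forall t, cons2 t (dec y (xi w)) (xi w)
                      /\ cons3 t (dec y (xi w)) (xi w)] >= p%:E)%E].

Definition infh (S : set policy) : \bar R := ereal_inf (hobj @` S).

Definition argminh (S : set policy) : set policy :=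
  [set y | S y /\ forall y', S y' -> (hobj y <= hobj y')%E].

End Problem.
Arguments Xset {R T M n} D t u H _.

(* Main.v *)
Require Import Defs.
From HB Require Import structures.
From mathcomp Require Import all_boot all_order all_algebra.
From mathcomp Require Import all_classical all_reals all_analysis.
From mathcomp Require Import ring lra measurable_realfun.
Import Order.TTheory GRing.Theory Num.Theory.
Import numFieldNormedType.Exports.
Local Open Scope classical_set_scope.
Local Open Scope ring_scope.
Unset Printing Implicit Defensive.

Section Topo.
Variable R : realType.

Lemma trunc_continuous (M j k : nat) : continuous (fun X : 'M[R]_(M, k) => trunc j X).
Proof.
move=> X s /= /(nbhs_ballP (trunc j X)) [e e0 es].
apply/nbhs_ballP; exists e => // N [_ XN]; apply: es; split => // i l.
rewrite !mxE; case: insub => [l'|]; [exact: XN | exact: ballxx].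
Qed.

Lemma trmx_continuous (m k : nat) : continuous (fun X : 'M[R]_(m, k) => X^T).
Proof.
move=> X s /= /(nbhs_ballP (X^T)) [e e0 es].
apply/nbhs_ballP; exists e => // N [_ XN]; apply: es; split => // i l.
rewrite !mxE; exact: XN.
Qed.

Lemma cont_sum (U : topologicalType) (I : finType) (P : pred I) (F : I -> U -> R) :
  (forall i, continuous (F i)) -> continuous (fun v => \sum_(i | P i) F i v).
Proof.
move=> c; elim: (index_enum I) => [|a l IH].
  under eq_fun do rewrite big_nil; exact: cst_continuous.
under eq_fun do rewrite big_cons; case: (P a) => //.
by move=> x; apply: continuousD; [exact: c | exact: IH].
Qed.

Lemma closed_le_fun (U : topologicalType) (g : U -> R) (c : R) :
  continuous g -> closed [set v | g v <= c].
Proof.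
move=> cg; have -> : [set v | g v <= c] = g @^-1` [set x | x <= c] by [].
by apply: preimage_closed; [move=> x _; exact: cg | exact: closed_le].
Qed.

Lemma mulmx_coord_continuous (m k : nat) (A : 'M[R]_(m, k)) i :
  continuous (fun v : 'cV[R]_k => (A *m v) i 0).
Proof.
under eq_fun do rewrite mxE.
apply: cont_sum => j x; apply: continuousM; first exact: cst_continuous.
exact: coord_continuous.
Qed.

Lemma sqdist_continuous (k : nat) (y : 'cV[R]_k) :
  continuous (fun v : 'cV[R]_k => sqdist v y).
Proof.
apply: cont_sum => j x.
have -> : (fun v : 'cV[R]_k => (v j 0 - y j 0) ^+ 2) =
   (fun v : 'cV[R]_k => v j 0 - y j 0) \* (fun v : 'cV[R]_k => v j 0 - y j 0).
  by apply: funext => v; rewrite /= expr2.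
apply: continuousM;
  apply: continuousB; (exact: coord_continuous || exact: cst_continuous).
Qed.


Lemma sqdist_ge0 k (a b : 'cV[R]_k) : 0 <= sqdist a b.
Proof. by apply: sumr_ge0 => i _; exact: sqr_ge0. Qed.

Lemma closed_poly (m k : nat) (A : 'M[R]_(m, k)) (c : 'cV[R]_m) :
  closed [set v : 'cV[R]_k | lev (A *m v) c].
Proof.
have -> : [set v : 'cV[R]_k | lev (A *m v) c] =
  \bigcap_(i in [set: 'I_m]) [set v | (A *m v) i 0 <= c i 0].
  apply/seteqP; split => v /= h i; first by move=> _; exact: h.
  exact: h.
apply: closed_bigI => i _; apply: closed_le_fun; exact: mulmx_coord_continuous.
Qed.

Lemma sq_bound (a r : R) : a ^+ 2 <= r -> `|a| <= 1 + r.
Proof.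
move=> h; have r0 : 0 <= r by apply: le_trans h; exact: sqr_ge0.
rewrite ler_norml; apply/andP; split; rewrite expr2 in h; nra.
Qed.

Lemma poly_min (m k : nat) (A : 'M[R]_(m, k)) (c : 'cV[R]_m) (y : 'cV[R]_k) :
  [set v | lev (A *m v) c] !=set0 ->
  exists w, lev (A *m w) c /\
    forall w', lev (A *m w') c -> sqdist w y <= sqdist w' y.
Proof.
move=> [v0 Xv0]; set rr := sqdist v0 y.
set S := [set v : 'cV[R]_k | lev (A *m v) c /\ sqdist v y <= rr].
set S' := [set r : 'rV[R]_k | S r^T].
have clS : closed S.
  apply: closedI; first exact: closed_poly.
  apply: closed_le_fun; exact: sqdist_continuous.
have clS' : closed S'.
  have -> : S' = (fun r : 'rV[R]_k => r^T) @^-1` S by [].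
  apply: preimage_closed => //; move=> x _; exact: trmx_continuous.
have bS' : bounded_set S'.
  exists (\sum_j `|y j 0| + 1 + rr); split; first by rewrite num_real.
  move=> B hB r [_ Sr]; apply: ltW; apply: le_lt_trans hB.
  rewrite /Num.norm /= mx_normrE; apply: bigmax_le.
    apply: addr_ge0; last exact: sqdist_ge0.
    by apply: addr_ge0 => //; apply: sumr_ge0 => j _; exact: normr_ge0.
  move=> [i j] _ /=; rewrite (ord1 i).
  have e1 : (r 0 j - y j 0) ^+ 2 <= rr.
    apply: le_trans Sr; rewrite /sqdist (bigD1 j) //= !mxE.
    by rewrite lerDl; apply: sumr_ge0 => l _; exact: sqr_ge0.
  have e2 : `|y j 0| <= \sum_j `|y j 0|.
    rewrite (bigD1 j) //= lerDl; apply: sumr_ge0 => l _; exact: normr_ge0.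
  have := sq_bound _ _ e1; have := ler_normD (r 0 j - y j 0) (y j 0).
  rewrite subrK; lra.
have cS' : compact S' by exact: bounded_closed_compact.
have cC : compact ((fun r : 'rV[R]_k => r^T) @` S').
  apply: continuous_compact => //; apply: continuous_subspaceT.
  exact: trmx_continuous.
have C0 : ((fun r : 'rV[R]_k => r^T) @` S') !=set0.
  exists v0; exists v0^T; last by rewrite trmxK.
  by rewrite /S' /S /= trmxK; split.
have fc : {within ((fun r : 'rV[R]_k => r^T) @` S'), continuous (fun v => sqdist v y)}.
  apply: continuous_subspaceT; exact: sqdist_continuous.
have [w wC wmin] := compact_EVT_min C0 cC fc.
move: wC wmin; rewrite inE => -[r [Xr rle] <-] wmin.

exists r^T; split => // w' Xw'.
have [le|gt] := leP (sqdist w' y) rr; last by apply: ltW; apply: le_lt_trans gt.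
apply: wmin; rewrite inE; exists w'^T; last by rewrite trmxK.
by rewrite /S' /S /= trmxK.
Qed.

End Topo.

Section Alg.
Variables (R : realType) (T M : nat) (n : 'I_T -> nat) (D : data R M n).

Lemma trunc_trunc (t tau : nat) (k : nat) (X : 'M[R]_(M, k)) :
  (tau <= t)%N -> trunc tau (trunc t X) = trunc tau X.
Proof.
move=> le; apply/matrixP => i l; rewrite !mxE.
have lt : (l < t)%N := leq_trans (ltn_ord l) le.
case: insubP => [l' _ Hl|]; last by rewrite lt.
by rewrite mxE Hl.
Qed.

Lemma colA_trunc (t tau : nat) (k : nat) (X : 'M[R]_(M, k)) :
  (tau < t)%N -> colA (trunc t X) tau = colA X tau.
Proof.
move=> lt; apply/matrixP => i j; rewrite !mxE.
case: insubP => [l' _ Hl|]; last by rewrite lt.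
by rewrite mxE Hl.
Qed.

Lemma Xset_ext (t : 'I_T) (u u' : forall tau : 'I_T, 'cV[R]_(n tau)) H :
  (forall tau : 'I_T, (tau < t)%N -> u tau = u' tau) ->
  Xset D t u H = Xset D t u' H.
Proof.
move=> e; rewrite /Xset.
have -> : \sum_(tau < T | (tau < t)%N) A3 D t tau *m u tau =
          \sum_(tau < T | (tau < t)%N) A3 D t tau *m u' tau.
  by apply: eq_bigr => tau lt; rewrite e.
by [].
Qed.

Section PiCon.
Variable y : policy R M n.

Fixpoint Fpi (k : nat) : policy R M n :=
  match k with
  | 0 => y
  | k'.+1 => fun t H => if val t == k' then
        Defs.proj (Xset D t (fun tau => Fpi k' tau (trunc (val tau) H)) H) (y t H)
      else Fpi k' t H
  end.

Definition zpi : policy R M n := fun t H => Fpi (val t).+1 t H.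

Lemma Fpi_z k (tau : 'I_T) H : (tau < k)%N -> Fpi k tau H = zpi tau H.
Proof.
elim: k => // k IH; rewrite ltnS leq_eqVlt => /orP[/eqP e|lt].
  by rewrite /zpi -e.
by rewrite /= (ltn_eqF lt) IH.
Qed.

Lemma zpi_isPi : isPi D y zpi.
Proof.
move=> t H; rewrite {1}/zpi /= eqxx; congr (Defs.proj _ _).
by apply: Xset_ext => tau lt; rewrite Fpi_z.
Qed.
End PiCon.

Lemma Pi_exists (y : policy R M n) : exists z, isPi D y z.
Proof. by exists (zpi y); exact: zpi_isPi. Qed.


Lemma sqdist_eq0 k (a b : 'cV[R]_k) : sqdist a b <= 0 -> a = b.
Proof.
move=> h; have h0 : sqdist a b = 0 by apply/eqP; rewrite eq_le h sqdist_ge0.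
have := psumr_eq0P (fun i _ => sqr_ge0 (a i 0 - b i 0)) h0.
move=> H; apply/matrixP => i j; rewrite (ord1 j).
by apply/eqP; rewrite -subr_eq0 -sqrf_eq0; apply/eqP; exact: H.
Qed.

Lemma sqdist_xx k (a : 'cV[R]_k) : sqdist a a = 0.
Proof. by rewrite /sqdist; apply: big1 => i _; rewrite subrr expr0n. Qed.

Lemma proj_id k (X : set 'cV[R]_k) v : X v -> Defs.proj X v = v.
Proof.
move=> Xv; rewrite /Defs.proj.
set S := [set u | X u /\ (forall w, X w -> sqdist u v <= sqdist w v)].
have : S (xget v S).
  apply: xgetPex; exists v; split => // w _; rewrite sqdist_xx; exact: sqdist_ge0.
by move=> [_ /(_ v Xv)]; rewrite sqdist_xx; exact: sqdist_eq0.
Qed.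

Lemma proj_in k (X : set 'cV[R]_k) v :
  (exists u, X u /\ forall w, X w -> sqdist u v <= sqdist w v) ->
  X (Defs.proj X v).
Proof. by move=> ex; rewrite /Defs.proj; case: (xgetPex v ex). Qed.

Lemma split_le (t : 'I_T) (F : 'I_T -> 'cV[R]_(m3 D t)) :
  \sum_(tau < T | (tau <= t)%N) F tau = F t + \sum_(tau < T | (tau < t)%N) F tau.
Proof.
rewrite (bigD1 t) //=; congr (_ + _); apply: eq_bigl => tau.
by rewrite ltn_neqAle andbC.
Qed.

Lemma cons3_Xset (t : 'I_T) (u : forall tau : 'I_T, 'cV[R]_(n tau)) X :
  cons3 D t u X <-> Xset D t u (trunc t X) (u t).
Proof.
rewrite /cons3 /Xset /= (split_le t (fun tau => A3 D t tau *m u tau)).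
have -> : \sum_(tau < T | (tau < t)%N) B3 D t tau *m colA (trunc t X) tau =
          \sum_(tau < T | (tau < t)%N) B3 D t tau *m colA X tau.
  by apply: eq_bigr => tau lt; rewrite colA_trunc.
split => h i; move: (h i); rewrite !mxE; lra.
Qed.

Definition has_min (t : 'I_T) :=
  forall (u : forall tau : 'I_T, 'cV[R]_(n tau)) (H : 'M[R]_(M, val t)) v,
  exists w, Xset D t u H w /\ forall w', Xset D t u H w' -> sqdist w v <= sqdist w' v.

Lemma Pi_agree (y z : policy R M n) X : isPi D y z ->
  (forall t, cons3 D t (dec y X) X) -> forall t : 'I_T, z t (trunc t X) = y t (trunc t X).
Proof.
move=> hPi hc.
suff : forall k (t : 'I_T), (t < k)%N -> z t (trunc t X) = y t (trunc t X).
  by move=> h t; apply: (h t.+1).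
elim=> // k IH t; rewrite ltnS => tk.
rewrite hPi (@Xset_ext t _ (dec y X)); last first.
  move=> tau lt; rewrite trunc_trunc ?(ltnW lt) // IH //.
  exact: leq_trans lt tk.
by rewrite proj_id //; have /cons3_Xset := hc t.
Qed.

Lemma Pi_agree_dec (y z : policy R M n) X : isPi D y z ->
  (forall t, cons3 D t (dec y X) X) -> dec z X = dec y X.
Proof.
move=> hPi hc; apply: functional_extensionality_dep => t.
exact: Pi_agree.
Qed.

Lemma Pi_cons3 (y z : policy R M n) X : isPi D y z ->
  (forall t, has_min t) -> forall t, cons3 D t (dec z X) X.
Proof.
move=> hPi hm t; apply/cons3_Xset.
have e := hPi t (trunc t X).
rewrite (@Xset_ext t _ (dec z X)) in e; last first.
  by move=> tau lt; rewrite trunc_trunc ?(ltnW lt).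
rewrite /dec e; apply: proj_in; exact: hm.
Qed.

End Alg.

Definition BorelS {U : topologicalType} := smallest (sigma_algebra setT) (@open U).

Lemma pre_sigma (U : Type) (V : topologicalType) (k : U -> V) (S : set (set U)) :
  sigma_algebra setT S -> (forall O, open O -> S (k @^-1` O)) ->
  forall A, BorelS A -> S (k @^-1` A).
Proof.
move=> [S0 SC SU] hO A hA; apply: (hA [set B | S (k @^-1` B)]); split.
  split => /=.
  - by rewrite preimage_set0.
  - move=> B hB; have -> : k @^-1` (setT `\` B) = setT `\` k @^-1` B by [].
    exact: SC.
  - move=> F hF.
    have -> : k @^-1` (\bigcup_i F i) = \bigcup_i (k @^-1` F i) by [].
    exact: SU.
by move=> O oO; exact: hO.
Qed.

Lemma BorelS_sigma (U : topologicalType) : sigma_algebra setT (@BorelS U).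
Proof. exact: smallest_sigma_algebra. Qed.

Lemma BorelS_open (U : topologicalType) (O : set U) : open O -> BorelS O.
Proof. by move=> oO; apply: sub_sigma_algebra. Qed.

Lemma borel_comp_cont (U V W : topologicalType) (k : U -> V) (f : V -> W) :
  continuous k -> borel_fun f -> borel_fun (f \o k).
Proof.
move=> ck bf B oB; rewrite comp_preimage; apply: pre_sigma; last exact: bf.
  exact: BorelS_sigma.
move=> O oO; apply: BorelS_open; apply: open_comp => // x _; exact: ck.
Qed.

Lemma borel_cont (U V : topologicalType) (f : U -> V) :
  continuous f -> borel_fun f.
Proof.
move=> cf B oB; apply: BorelS_open; apply: open_comp => // x _; exact: cf.
Qed.

Section Meas.
Variables (d : measure_display) (Omega : measurableType d) (R : realType).
Variable (V : topologicalType) (xi : Omega -> V).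
Hypothesis hxi : forall U : set V, open U -> measurable (xi @^-1` U).

Lemma mf_open (f : Omega -> R) :
  (forall O : set R, open O -> measurable (f @^-1` O)) -> measurable_fun setT f.
Proof.
move=> h; apply: (measurability _ (RGenOpens.measurableE R)).
move=> _ [_ [a [b ->]] <-]; rewrite setTI; apply: h; exact: interval_open.
Qed.

Lemma mf_borel (g : V -> R) : borel_fun g -> measurable_fun setT (g \o xi).
Proof.
move=> bg; apply: mf_open => O oO; rewrite comp_preimage.
apply: (@pre_sigma Omega V xi (@measurable _ Omega)); last exact: bg.
  exact: sigma_algebra_measurable.
exact: hxi.
Qed.

End Meas.

Lemma borel_cont_comp (U V W : topologicalType) (f : U -> V) (h : V -> W) :
  borel_fun f -> continuous h -> borel_fun (h \o f).
Proof.
move=> bf ch B oB; rewrite comp_preimage; apply: bf.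
apply: open_comp => // x _; exact: ch.
Qed.

Section Vec.
Variables (d : measure_display) (Omega : measurableType d) (R : realType).
Implicit Types k m : nat.

Definition mf (f : Omega -> R) := measurable_fun setT f.
Definition mv {k} (f : Omega -> 'cV[R]_k) := forall i, mf (fun w => f w i 0).

Lemma mf_sum (I : finType) (P : pred I) (F : I -> Omega -> R) :
  (forall j, mf (F j)) -> mf (fun w => \sum_(j | P j) F j w).
Proof.
move=> c; rewrite /mf; elim: (index_enum I) => [|a l IH].
  under eq_fun do rewrite big_nil; exact: measurable_cst.
under eq_fun do rewrite big_cons; case: (P a) => //.
exact: (measurable_funD (c a) IH).
Qed.

Lemma mv_cst k (c : 'cV[R]_k) : mv (fun _ => c).
Proof. by move=> i; exact: measurable_cst. Qed.

Lemma mv_add k (f g : Omega -> 'cV[R]_k) : mv f -> mv g -> mv (fun w => f w + g w).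
Proof. by move=> hf hg i; rewrite /mf; under eq_fun do rewrite !mxE; exact: (measurable_funD (hf i) (hg i)). Qed.

Lemma mv_sub k (f g : Omega -> 'cV[R]_k) : mv f -> mv g -> mv (fun w => f w - g w).
Proof. by move=> hf hg i; rewrite /mf; under eq_fun do rewrite !mxE; exact: (measurable_funB (hf i) (hg i)). Qed.

Lemma mv_mul m k (A : 'M[R]_(m, k)) (f : Omega -> 'cV[R]_k) :
  mv f -> mv (fun w => A *m f w).
Proof.
move=> hf i; rewrite /mf; under eq_fun do rewrite !mxE; apply: mf_sum => j.
exact: (measurable_funM (measurable_cst _) (hf j)).
Qed.

Lemma mv_sum k (I : finType) (P : pred I) (F : I -> Omega -> 'cV[R]_k) :
  (forall j, mv (F j)) -> mv (fun w => \sum_(j | P j) F j w).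
Proof.
move=> hF i; rewrite /mf; under eq_fun do rewrite summxE; apply: mf_sum => j; exact: hF.
Qed.

Lemma mv_posv k (f : Omega -> 'cV[R]_k) : mv f -> mv (fun w => posv (f w)).
Proof.
move=> hf i; rewrite /mf; under eq_fun do rewrite !mxE.
exact: (measurable_maxr (hf i) (measurable_cst _)).
Qed.

Lemma mf_dotv k (a : 'cV[R]_k) (f : Omega -> 'cV[R]_k) : mv f -> mf (fun w => dotv a (f w)).
Proof.
move=> hf; apply: mf_sum => j; exact: (measurable_funM (measurable_cst _) (hf j)).
Qed.

Lemma mv_lev k (f : Omega -> 'cV[R]_k) (b : 'cV[R]_k) :
  mv f -> measurable [set w | lev (f w) b].
Proof.
move=> hf.
have -> : [set w | lev (f w) b] = \bigcap_(i in [set: 'I_k]) [set w | f w i 0 <= b i 0].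
  apply/seteqP; split => w /= h i; first by move=> _; exact: h.
  exact: h.
apply: fin_bigcap_measurable; first exact: finite_finset.
move=> i _.
have := hf i measurableT `]-oo, b i 0]%classic (measurable_itv _).
rewrite setTI; congr measurable; apply/seteqP; split => w /=; rewrite in_itv /=; done.
Qed.

Lemma meas_forall (I : finType) (F : I -> set Omega) :
  (forall i, measurable (F i)) -> measurable [set w | forall i, F i w].
Proof.
move=> h; have -> : [set w | forall i, F i w] = \bigcap_(i in [set: I]) F i.
  apply/seteqP; split => w /= hw i; first by move=> _; exact: hw.
  exact: hw.
apply: fin_bigcap_measurable; first exact: finite_finset.
move=> i _. exact: h.
Qed.

End Vec.
Arguments mv {d Omega R k} f.
Arguments mf {d Omega R} f.
Arguments mf_borel {d Omega R V xi} hxi g.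


Section Prob.
Variables (R : realType) (T M : nat) (n : 'I_T -> nat) (D : data R M n).
Variables (d : measure_display) (Omega : measurableType d) (P : probability Omega R).
Variable (xi : Omega -> 'M[R]_(M, T)).
Hypothesis hxi : forall U : set 'M[R]_(M, T), open U -> measurable (xi @^-1` U).

Lemma mv_dec (y : policy R M n) : is_policy y -> forall tau, mv (fun w => dec y (xi w) tau).
Proof.
move=> hy tau i.
pose g := (fun X : 'cV[R]_(n tau) => X i 0) \o (y tau \o (fun X : 'M[R]_(M, T) => trunc tau X)).
have : measurable_fun setT (g \o xi).
  apply: mf_borel => //; apply: borel_cont_comp; last exact: coord_continuous.
  apply: borel_comp_cont; last exact: hy.
  exact: trunc_continuous.
by [].
Qed.

Lemma colA_continuous (tau : nat) i :
  continuous (fun X : 'M[R]_(M, T) => colA X tau i 0).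
Proof.
rewrite /colA; under eq_fun do rewrite mxE.
case: insub => [l|]; [exact: coord_continuous | exact: cst_continuous].
Qed.

Lemma mv_colA (tau : nat) : mv (fun w => colA (xi w) tau).
Proof.
move=> i; apply: (mf_borel hxi (fun X : 'M[R]_(M, T) => colA X tau i 0)).
apply: borel_cont; exact: colA_continuous.
Qed.


Lemma meas_cons2_t (y : policy R M n) t : is_policy y ->
  measurable [set w | cons2 D t (dec y (xi w)) (xi w)].
Proof.
move=> hy; apply: mv_lev; apply: mv_add; apply: mv_sum => tau; apply: mv_mul.
  exact: mv_dec.
exact: mv_colA.
Qed.

Lemma meas_cons3_t (y : policy R M n) t : is_policy y ->
  measurable [set w | cons3 D t (dec y (xi w)) (xi w)].
Proof.
move=> hy; apply: mv_lev; apply: mv_add; apply: mv_sum => tau; apply: mv_mul.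
  exact: mv_dec.
exact: mv_colA.
Qed.

Lemma mf_stage (y : policy R M n) t : is_policy y ->
  measurable_fun setT (fun w => (stage_cost D t (dec y (xi w)) (xi w))%:E).
Proof.
move=> hy; apply/measurable_EFinP.
apply: measurable_funD.
  apply: mf_dotv; exact: mv_dec.
apply: mf_dotv; apply: mv_posv; apply: mv_sub; last exact: mv_cst.
apply: mv_add; apply: mv_sum => tau; apply: mv_mul.
  exact: mv_dec.
exact: mv_colA.
Qed.

End Prob.

Section Main.
Variables (R : realType) (T M : nat) (n : 'I_T -> nat) (D : data R M n).
Variables (d : measure_display) (Omega : measurableType d) (P : probability Omega R).
Variable (xi : Omega -> 'M[R]_(M, T)) (p : R).
Hypothesis hxi : forall U : set 'M[R]_(M, T), open U -> measurable (xi @^-1` U).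

Lemma ae_cons3 (y : policy R M n) : M1 D P xi p y ->
  exists N, [/\ measurable N, P N = 0%E &
    forall w, ~ N w -> forall t, cons3 D t (dec y (xi w)) (xi w)].
Proof.
move=> [_ [_ h]]; case: h => N [mN N0 sub]; exists N; split => // w Nw.
apply: contrapT => hw; apply: Nw; apply: sub; exact: hw.
Qed.


Let S2 (y : policy R M n) := [set w | forall t, cons2 D t (dec y (xi w)) (xi w)].
Let S23 (y : policy R M n) := [set w | forall t, cons2 D t (dec y (xi w)) (xi w)
                      /\ cons3 D t (dec y (xi w)) (xi w)].

Lemma mS2 y : is_policy y -> measurable (S2 y).
Proof. by move=> hy; apply: meas_forall => t; exact: meas_cons2_t. Qed.

Lemma mS23 y : is_policy y -> measurable (S23 y).
Proof.
move=> hy; apply: meas_forall => t.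
by apply: measurableI; [exact: meas_cons2_t | exact: meas_cons3_t].
Qed.

Lemma M1_M2 y : M1 D P xi p y -> M2 D P xi p y.
Proof.
move=> hM; have [hy [h2 _]] := hM; have [N [mN N0 hN]] := ae_cons3 y hM.
split => //; apply: (le_trans h2).
have sub : S2 y `<=` S23 y `|` N.
  move=> w h; have [Nw|Nw] := pselect (N w); first by right.
  by left => t; split; [exact: h | exact: hN].
apply: (le_trans (le_measure _ _ _ sub)).
- by rewrite inE; exact: mS2.
- by rewrite inE; apply: measurableU => //; exact: mS23.
apply: (le_trans (measureU2 _ _ _)) => //; first exact: mS23.
rewrite [X in (_ + X <= _)%E](_ : _ = 0%E); last exact: N0.
by rewrite adde0.
Qed.


Lemma Pi_M1 (y z : policy R M n) : (forall t, @has_min _ _ _ _ D t) -> is_policy z ->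
  M2 D P xi p y -> isPi D y z -> M1 D P xi p z.
Proof.
move=> hm hz [hy h23] hPi; split => //; split.
  apply: (le_trans h23); apply: le_measure.
  - by rewrite inE; exact: mS23.
  - by rewrite inE; exact: mS2.
  move=> w h; have hc : forall t, cons3 D t (dec y (xi w)) (xi w).
    by move=> t; case: (h t).
  rewrite /= (@Pi_agree_dec _ _ _ _ _ y z (xi w) hPi hc) => t.
  by case: (h t).
by apply: aeW => w t; exact: (@Pi_cons3 _ _ _ _ _ y z (xi w) hPi hm).
Qed.

Lemma hobj_Pi (y z : policy R M n) : M1 D P xi p y -> isPi D y z -> is_policy z ->
  hobj D P xi z = hobj D P xi y.
Proof.
move=> hM hPi hz; have hy := hM.1; have [N [mN N0 hN]] := ae_cons3 y hM.
rewrite /hobj; apply: eq_bigr => t _.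
apply: ae_eq_integral => //; [exact: mf_stage | exact: mf_stage |].
exists N; split.
- exact: mN.
- exact N0.
- idtac.
move=> w /= hw; apply: contrapT => Nw; apply: hw => _.
by rewrite (@Pi_agree_dec _ _ _ _ _ y z (xi w) hPi (hN w Nw)).
Qed.

End Main.
Theorem lemma2p2 (R : realType) (T M : nat) (n : 'I_T -> nat)
  (D : data R M n)
  (d : measure_display) (Omega : measurableType d) (P : probability Omega R)
  (xi : Omega -> 'M[R]_(M, T)) (p : R) (K : set (policy R M n)) :
  (2 <= T)%N -> (1 <= M)%N -> (forall t : 'I_T, (1 <= n t)%N) ->
  (* xi is a random vector (Borel measurable) *)
  (forall U : set 'M[R]_(M, T), open U -> measurable (xi @^-1` U)) ->
  (* the penalty vectors are nonnegative, and B^(3)_{t,t} = 0 *)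
  (forall (t : 'I_T) i, 0 <= Pen D t i 0) ->
  (forall t : 'I_T, B3 D t t = 0) ->
  0 < p <= 1 ->
  (* the sets X_t are nonempty for all arguments *)
  (forall (t : 'I_T) (u : forall tau : 'I_T, 'cV[R]_(n tau))
          (H : 'M[R]_(M, val t)), Xset D t u H !=set0) ->
  (* Pi(y) is a policy whenever y is *)
  (forall y z : policy R M n, is_policy y -> isPi D y z -> is_policy z) ->
  (* K is a set of policies *)
  (forall y, K y -> is_policy y) ->
  let M1s := M1 D P xi p in
  let M2s := M2 D P xi p in
  let phi := infh D P xi M1s in
  let phi1 := infh D P xi (M1s `&` K) in
  let phi3 := infh D P xi (PiImg D (M2s `&` K)) in
  let phi4 := infh D P xi (M1s `&` PiImg D K) in
  let Ystar := argminh D P xi (M2s `&` K) in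
  let phi2 := infh D P xi (PiImg D Ystar) in
  [/\ M1s `&` K `<=` M1s, PiImg D (M2s `&` K) `<=` M1s,
      M1s `&` PiImg D K `<=` M1s, PiImg D Ystar `<=` M1s &
      [/\ (phi3 <= phi1)%E, (phi3 <= phi2)%E, (phi4 <= phi3)%E & (phi <= phi4)%E]].
Proof.
move=> hT hM hn hxi hPen hB3 hp hne hpol hK M1s M2s phi phi1 phi3 phi4 Ystar phi2.
have hm : forall t, @has_min _ _ _ _ D t.
  move=> t u H v; have [w0 hw0] := hne t u H.
  rewrite /Xset; apply: poly_min; exists w0; exact: hw0.
have PiM1 : PiImg D (M2s `&` K) `<=` M1s.
  move=> z [y [hM2 hKy] hPi].
  apply: (@Pi_M1 R T M n D d Omega P xi p hxi y z hm _ hM2 hPi).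
  exact: (hpol y z hM2.1 hPi).
have YM : Ystar `<=` M2s `&` K by move=> y [].
have PiY : PiImg D Ystar `<=` PiImg D (M2s `&` K).
  by move=> z [y hy hPi]; exists y => //; exact: YM.
split.
- by move=> y [].
- exact: PiM1.
- by move=> y [].
- by move=> z /PiY; exact: PiM1.
split.
- rewrite /phi3 /phi1 /infh; apply: le_ereal_inf_tmp => _ [y [hM1 hKy] <-].
  have [z hz] := Pi_exists R T M n D y.
  have hpz : is_policy z := hpol y z hM1.1 hz.
  rewrite -(@hobj_Pi R T M n D d Omega P xi p hxi y z hM1 hz hpz).
  apply: ereal_inf_lbound; exists z => //; exists y => //; split => //.
  exact: (@M1_M2 R T M n D d Omega P xi p hxi y hM1).
- rewrite /phi3 /phi2 /infh; apply: ereal_inf_le_tmp; exact: image_subset.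
- rewrite /phi4 /phi3 /infh; apply: ereal_inf_le_tmp; apply: image_subset.
  move=> z hz; split; first exact: PiM1.
  by case: hz => y [_ hKy] hPi; exists y.
- rewrite /phi /phi4 /infh; apply: ereal_inf_le_tmp; apply: image_subset.
  by move=> y [].
Qed.
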